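(* Let $K$ be a field of characteristic zero and $W_n$ the Witt Lie algebra. Let $a$ be a nonzero locally finite element of $W_n$. Then for every $\lambda\in\mathbb{Z}^n$ the elements $l^+_\lambda(a)$ and $l^-_\lambda(a)$ are locally finite.
   Context: $W_n=\mathrm{Der}_K(K[x_1^{\pm1},\ldots,x_n^{\pm1}])=\bigoplus_{\alpha\in\mathbb{Z}^n}x^\alpha\mathcal{H}_n$, where $x^\alpha=x_1^{\alpha_1}\cdots x_n^{\alpha_n}$, $\mathcal{H}_n=\bigoplus_{i=1}^nKH_i$, $H_i=x_i\partial_i$. An element $a$ of a Lie algebra $\mathcal{G}$ is locally finite if $\dim_K\sum_{i\ge0}K\,\mathrm{ad}(a)^i(b)<\infty$ for all $b\in\mathcal{G}$. For $\lambda\in\mathbb{Z}^n$, the $(\mathbb{Z},\lambda)$-grading is $W_n=\bigoplus_{i\in\mathbb{Z}}W_{n,i}(\lambda)$ with $W_{n,i}(\lambda)=\bigoplus_{\alpha:\sum_j\lambda_j\alpha_j=i}x^\alpha\mathcal{H}_n$ (it is a Lie algebra grading). Writing $a=a_{i_1}+\cdots+a_{i_s}$ with $0\ne a_{i_\nu}\in W_{n,i_\nu}(\lambda)$ and $i_1<\cdots<i_s$, set $l^+_\lambda(a)=a_{i_s}$ (leading term) and $l^-_\lambda(a)=a_{i_1}$ (least term). *)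

(* Defs.v *)
From HB Require Import structures.
From mathcomp Require Import all_boot all_order all_algebra.
Set Implicit Arguments. Unset Strict Implicit. Unset Printing Implicit Defensive.
Import Order.TTheory GRing.Theory Num.Theory.
Local Open Scope ring_scope.

(* The Witt algebra W_n = (+)_{alpha in Z^n} x^alpha H_n over a field K.
   An element is given as a finite formal sum of terms x^alpha h, where
   alpha : 'rV[int]_n is the exponent and h : 'rV[K]_n the coordinates of
   h = sum_i h_i H_i in the basis H_1..H_n. Two formal sums denote the same
   element of W_n iff all their coefficients [coef] agree ([weq]). *)

Section Witt.
Variables (K : fieldType) (n : nat).

Definition wterm := ('rV[int]_n * 'rV[K]_n)%type.
Definition wexpr := seq wterm.

Definition coef (a : wexpr) (g : 'rV[int]_n) : 'rV[K]_n :=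
  \sum_(p <- a | p.1 == g) p.2.

Definition weq (a b : wexpr) : Prop := forall g, coef a g = coef b g.

Definition wnonzero (a : wexpr) : Prop := exists g, coef a g != 0.

(* h(beta) where h = sum_i h_i H_i and H_i(x^beta) = beta_i x^beta *)
Definition hpair (h : 'rV[K]_n) (beta : 'rV[int]_n) : K :=
  \sum_(i < n) h 0 i * (beta 0 i)%:~R.

(* [x^alpha h, x^beta h'] = x^(alpha+beta) (h(beta) h' - h'(alpha) h) *)
Definition brterm (p q : wterm) : wterm :=
  (p.1 + q.1, hpair p.2 q.1 *: q.2 - hpair q.2 p.1 *: p.2).

Definition wbr (a b : wexpr) : wexpr := [seq brterm p q | p <- a, q <- b].

Definition wscale (c : K) (a : wexpr) : wexpr := [seq (p.1, c *: p.2) | p <- a].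

Definition wcomb (L : seq wexpr) (c : seq K) : wexpr :=
  flatten [seq wscale pc.2 pc.1 | pc <- zip L c].

(* a is locally finite: for every b, the span of { ad(a)^i b | i >= 0 } is
   finite dimensional, i.e. contained in the span of finitely many elements. *)
Definition locally_finite (a : wexpr) : Prop :=
  forall b : wexpr, exists L : seq wexpr, forall i : nat,
    exists c : seq K, weq (iter i (wbr a) b) (wcomb L c).

Definition ldeg (lam alpha : 'rV[int]_n) : int := \sum_(j < n) lam 0 j * alpha 0 j.

Definition hcomp (lam : 'rV[int]_n) (d : int) (a : wexpr) : wexpr :=
  [seq p <- a | ldeg lam p.1 == d].

Definition wsupp (a : wexpr) : seq 'rV[int]_n :=
  [seq g <- map fst a | coef a g != 0].

Definition degs (lam : 'rV[int]_n) (a : wexpr) : seq int :=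
  map (ldeg lam) (wsupp a).

Definition topdeg lam a : int := foldr Num.max (head 0 (degs lam a)) (degs lam a).
Definition botdeg lam a : int := foldr Num.min (head 0 (degs lam a)) (degs lam a).

Definition lplus (lam : 'rV[int]_n) (a : wexpr) : wexpr := hcomp lam (topdeg lam a) a.
Definition lminus (lam : 'rV[int]_n) (a : wexpr) : wexpr := hcomp lam (botdeg lam a) a.

End Witt.

(* Main.v *)
Require Import Defs.
From HB Require Import structures.
From mathcomp Require Import all_boot all_order all_algebra.
From mathcomp Require Import zify.
Import Order.TTheory GRing.Theory Num.Theory.
Set Implicit Arguments. Unset Strict Implicit.
Local Open Scope ring_scope.


Section W.
Variables (K : fieldType) (n : nat).
Local Notation E := 'rV[int]_n.
Local Notation V := 'rV[K]_n.

Definition B (g d : E) (x y : V) : V := hpair x d *: y - hpair y g *: x.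

Lemma hpairD (x y : V) g : hpair (x + y) g = hpair x g + hpair y g.
Proof. by rewrite /hpair -big_split /=; apply: eq_bigr => i _; rewrite mxE mulrDl. Qed.
Lemma hpairZ (k : K) (x : V) g : hpair (k *: x) g = k * hpair x g.
Proof. by rewrite /hpair mulr_sumr; apply: eq_bigr => i _; rewrite mxE mulrA. Qed.
Lemma hpair0 g : hpair (0 : V) g = 0.
Proof. by rewrite /hpair big1 // => i _; rewrite mxE mul0r. Qed.
Lemma hpairN (x : V) g : hpair (- x) g = - hpair x g.
Proof. by rewrite -scaleN1r hpairZ mulN1r. Qed.
Lemma hpairDr (x : V) g d : hpair x (g + d) = hpair x g + hpair x d.
Proof. by rewrite /hpair -big_split /=; apply: eq_bigr => i _; rewrite mxE intrD mulrDr. Qed.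
Lemma hpairr0 (x : V) : hpair x 0 = 0.
Proof. by rewrite /hpair big1 // => i _; rewrite mxE mulr0. Qed.
Lemma hpairMn (x : V) g m : hpair x (g *+ m) = hpair x g *+ m.
Proof.
elim: m => [|m IH]; first by rewrite !mulr0n hpairr0.
by rewrite !mulrS hpairDr IH.
Qed.

Lemma BDr g d x y y' : B g d x (y + y') = B g d x y + B g d x y'.
Proof.
rewrite /B hpairD scalerDr scalerDl opprD.
by rewrite addrACA.
Qed.
Lemma BDl g d x x' y : B g d (x + x') y = B g d x y + B g d x' y.
Proof.
rewrite /B hpairD scalerDr scalerDl opprD.
by rewrite addrACA.
Qed.
Lemma B0r g d x : B g d x 0 = 0.
Proof. by rewrite /B hpair0 scale0r scaler0 subrr. Qed.
Lemma B0l g d y : B g d 0 y = 0.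
Proof. by rewrite /B hpair0 scale0r scaler0 subrr. Qed.

Lemma wcoef_cons p (a : wexpr K n) g :
  coef (p :: a) g = (if p.1 == g then p.2 else 0) + coef a g.
Proof. by rewrite /coef big_cons; case: ifP; rewrite ?add0r. Qed.
Lemma wcoef_nil g : coef ([::] : wexpr K n) g = 0.
Proof. by rewrite /coef big_nil. Qed.

Lemma group_sum (W : zmodType) (F : E -> V -> W) (a : wexpr K n) (s : seq E) :
  (forall g x y, F g (x + y) = F g x + F g y) -> uniq s ->
  {subset map fst a <= s} ->
  \sum_(p <- a) F p.1 p.2 = \sum_(g <- s) F g (coef a g).
Proof.
move=> FD us.
have F0 : forall g, F g 0 = 0.
  by move=> g; have h := FD g 0 0; rewrite addr0 in h; apply: (addrI (F g 0)); rewrite -h addr0.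
elim: a => [|p a IH] sub.
  by rewrite big_nil big1 // => g _; rewrite wcoef_nil F0.
rewrite big_cons IH; last by move=> x xa; apply: sub; rewrite inE xa orbT.
have ps : p.1 \in s by apply: sub; rewrite inE eqxx.
under [in RHS]eq_bigr => g _ do rewrite wcoef_cons FD.
rewrite big_split /=; congr (_ + _).
rewrite (bigD1_seq p.1) //= eqxx big1 ?addr0 // => g /negbTE gp.
by rewrite eq_sym gp F0.
Qed.

Lemma coef_wbr (a c : wexpr K n) g :
  coef (wbr a c) g = \sum_(p <- a) \sum_(q <- c)
     (if p.1 + q.1 == g then B p.1 q.1 p.2 q.2 else 0).
Proof.
rewrite /coef /wbr big_mkcond big_allpairs_dep /=.
by apply: eq_bigr => p _; apply: eq_bigr => q _.
Qed.

Lemma coef_wbr2 (a c : wexpr K n) (sa sc : seq E) g :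
  uniq sa -> {subset map fst a <= sa} ->
  uniq sc -> {subset map fst c <= sc} ->
  coef (wbr a c) g = \sum_(x <- sa) \sum_(y <- sc)
     (if x + y == g then B x y (coef a x) (coef c y) else 0).
Proof.
move=> ua sa' uc sc'; rewrite coef_wbr.
under eq_bigr => p _.
  rewrite (group_sum (F:=fun y v => if p.1 + y == g then B p.1 y p.2 v else 0) (a:=c) (s:=sc)) //; last first.
    by move=> y u v; case: ifP; rewrite ?BDr ?addr0.
  over.
rewrite /= (group_sum (F:=fun x u => \sum_(y <- sc)
    (if x + y == g then B x y u (coef c y) else 0)) (a:=a) (s:=sa)) //.
move=> x u v; rewrite -big_split /=; apply: eq_bigr => y _.
by case: ifP; rewrite ?BDl ?addr0.
Qed.

End W.



Section W2.
Variables (K : fieldType) (n : nat).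
Local Notation E := 'rV[int]_n.
Local Notation V := 'rV[K]_n.

Lemma wcomb_singles (b : wexpr K n) (f : (E * V) -> K) :
  wcomb [seq [:: q] | q <- b] [seq f q | q <- b] = [seq (q.1, f q *: q.2) | q <- b].
Proof. by elim: b => [|q b IH] //; rewrite /wcomb /= in IH *; rewrite IH. Qed.

Lemma coef_hcomp lam d (a : wexpr K n) g :
  coef (hcomp lam d a) g = if ldeg lam g == d then coef a g else 0.
Proof.
rewrite /coef /hcomp big_filter_cond; case: ifP => H.
  by apply: eq_bigl => p; case: (eqVneq p.1 g) => [->|]; rewrite ?H ?andbF ?andbT.
by rewrite big1 // => p /andP [/eqP e /eqP pg]; move: H; rewrite -pg e eqxx.
Qed.

Lemma coef_ad0 (x c : wexpr K n) g :
  (forall g, g != 0 -> coef x g = 0) ->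
  coef (wbr x c) g = hpair (coef x 0) g *: coef c g.
Proof.
move=> x0; rewrite coef_wbr.
have s1 : {subset map fst x <= undup (0 :: map fst x)}.
  by move=> y yx; rewrite mem_undup inE yx orbT.
have s2 : forall y u v, \sum_(q <- c) (if y + q.1 == g then B y q.1 (u + v) q.2 else 0) =
   \sum_(q <- c) (if y + q.1 == g then B y q.1 u q.2 else 0) +
   \sum_(q <- c) (if y + q.1 == g then B y q.1 v q.2 else 0).
  by move=> y u v; rewrite -big_split /=; apply: eq_bigr => q _; case: ifP => _; rewrite ?BDl ?addr0.
rewrite (group_sum (F:=fun y v => \sum_(q <- c) (if y + q.1 == g then B y q.1 v q.2 else 0))
   (a:=x) (s:=undup (0 :: map fst x))) ?undup_uniq //.
rewrite (bigD1_seq 0) ?undup_uniq ?mem_undup ?inE ?eqxx // /= [X in _ + X]big1 ?addr0; last first.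
  by move=> y y0; rewrite x0 // big1 // => q _; rewrite B0l; case: ifP.
rewrite [coef c g]/coef [in RHS]big_mkcond scaler_sumr; apply: eq_bigr => q _ /=.
rewrite add0r; case: eqP => [<-|]; last by rewrite scaler0.
by rewrite /B hpairr0 scale0r subr0.
Qed.

Lemma coef_iter0 (x b : wexpr K n) i g :
  (forall g, g != 0 -> coef x g = 0) ->
  coef (iter i (wbr x) b) g = hpair (coef x 0) g ^+ i *: coef b g.
Proof.
move=> x0; elim: i => [|i IH]; first by rewrite expr0 scale1r.
by rewrite iterS coef_ad0 // IH scalerA exprS.
Qed.

Lemma lf0 (x : wexpr K n) :
  (forall g, g != 0 -> coef x g = 0) -> locally_finite x.
Proof.
move=> x0 b; exists [seq [:: q] | q <- b] => i.
exists [seq hpair (coef x 0) q.1 ^+ i | q <- b] => g.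
rewrite coef_iter0 // (wcomb_singles b (fun q => hpair (coef x 0) q.1 ^+ i)).
rewrite /coef big_map scaler_sumr big_mkcond [RHS]big_mkcond /=.
by apply: eq_bigr => q _; case: eqP => [->|]; rewrite ?scaler0.
Qed.

Lemma coef_nz_mem (a : wexpr K n) g : coef a g != 0 -> g \in map fst a.
Proof.
elim: a => [|[x v] a IH]; first by rewrite wcoef_nil eqxx.
rewrite wcoef_cons /= inE; case: (eqVneq x g) => [_|_] //.
by rewrite add0r => /IH ->; rewrite orbT.
Qed.

Lemma wcomb_fst (L : seq (wexpr K n)) c :
  {subset map fst (wcomb L c) <= flatten [seq map fst l | l <- L]}.
Proof.
elim: L c => [|l L IH] [|k c] //= g.
rewrite /wcomb /= map_cat mem_cat => /orP [|].
  by rewrite /wscale -map_comp mem_cat => ->.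
by move=> /IH; rewrite mem_cat => ->; rewrite orbT.
Qed.

End W2.



Lemma intr_neq0K (K : fieldType) (z : int) : [pchar K] =i pred0 -> z != 0 -> (z%:~R : K) != 0.
Proof.
move=> /pcharf0P c0; case: z => m.
  by rewrite -pmulrn c0 => /eqP h; apply/eqP => e; apply: h; rewrite e.
by move=> _; rewrite NegzE mulrNz -pmulrn oppr_eq0 c0.
Qed.

Lemma mxMn (R : zmodType) n (A : 'rV[R]_n) j m : (A *+ m) 0 j = A 0 j *+ m.
Proof.
elim: m => [|m IH]; first by rewrite !mulr0n mxE.
by rewrite !mulrS mxE IH.
Qed.

Lemma nz_entry (R : zmodType) n (x : 'rV[R]_n) : x != 0 -> exists j, x 0 j != 0.
Proof.
move=> xn; case: (pickP (fun j => x 0 j != 0)) => [j xj|H]; first by exists j.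
case/eqP: xn; apply/rowP => k; rewrite mxE; apply/eqP.
by have := H k => /negbFE.
Qed.

Section W3.
Variables (K : fieldType) (n : nat).
Local Notation E := 'rV[int]_n.
Local Notation V := 'rV[K]_n.
Variables (a : wexpr K n) (al : E) (w : E -> int).
Hypothesis wD : forall x y, w (x + y) = w x + w y.
Hypothesis al_nz : al != 0.
Hypothesis h_nz : coef a al != 0.
Hypothesis wmax : forall g, coef a g != 0 -> g != al -> w g < w al.
Local Notation h := (coef a al).

Lemma sum_if1 (T : eqType) (W : zmodType) (s : seq T) j (v : W) :
  uniq s -> j \in s -> \sum_(x <- s) (if x == j then v else 0) = v.
Proof. by move=> us js; rewrite (bigD1_seq j) //= eqxx big1 ?addr0 // => x /negbTE ->. Qed.

Lemma step (c : wexpr K n) (d : E) :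
  (forall g, g != d -> w d <= w g -> coef c g = 0) ->
  coef (wbr a c) (d + al) = B al d h (coef c d) /\
  (forall g, g != d + al -> w (d + al) <= w g -> coef (wbr a c) g = 0).
Proof.
move=> Hc.
have key : forall g, w (d + al) <= w g -> coef (wbr a c) g =
   if g == d + al then B al d h (coef c d) else 0.
  move=> g wg.
  rewrite (coef_wbr2 (sa := undup (al :: map fst a)) (sc := undup (d :: map fst c)))
    ?undup_uniq //; try by move=> y yc; rewrite mem_undup inE yc orbT.
  have T : forall x y, (if x + y == g then B x y (coef a x) (coef c y) else 0) =
     if x == al then (if y == d then (if g == d + al then B al d h (coef c d) else 0)
        else 0) else 0.
    move=> x y.
    case: (eqVneq (x + y) g) => [e|ne]; last first.
      case: (eqVneq x al) => [xa|] //; case: (eqVneq y d) => [yd|] //.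
      by rewrite -xa -yd [y + x]addrC eq_sym (negbTE ne).
    case: (eqVneq (coef a x) 0) => [ax|ax].
      rewrite ax B0l; case: (eqVneq x al) => [xa|] //.
      by move: h_nz; rewrite -xa ax eqxx.
    case: (eqVneq (coef c y) 0) => [cy|cy].
      rewrite cy B0r; case: (eqVneq x al) => [xa|] //; case: (eqVneq y d) => [yd|] //.
      by rewrite -yd cy B0r; case: ifP.
    have wy : w y <= w d.
      case: (eqVneq y d) => [->|yd] //.
      rewrite leNgt; apply/negP => dy.
      by move: cy; rewrite Hc ?eqxx // ltW.
    case: (eqVneq x al) => [xa|xa]; last first.
      have := wmax ax xa; move: wg; rewrite -e !wD => *; lia.
    case: (eqVneq y d) => [yd|yd]; last first.
      have : w y < w d.
        rewrite lt_neqAle wy andbT; apply/negP => /eqP wyd.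
        by move: cy; rewrite Hc ?eqxx // wyd.
      move: wg; rewrite -e !wD xa => *; lia.
    by rewrite -e xa yd addrC eqxx.
  under eq_bigr => x _.
    under eq_bigr => y _ do rewrite T.
    rewrite (_ : \sum_(y <- undup (d :: map fst c)) _ =
      if x == al then (if g == d + al then B al d h (coef c d) else 0) else 0).
      over.
    case: (x == al); last by rewrite big1.
    by rewrite sum_if1 ?undup_uniq ?mem_undup ?inE ?eqxx.
  by rewrite sum_if1 ?undup_uniq ?mem_undup ?inE ?eqxx.
split; first by rewrite key ?eqxx.
by move=> g gd wg; rewrite key // (negbTE gd).
Qed.


Fixpoint hs (beta : E) (h0 : V) (i : nat) : V :=
  match i with 0 => h0 | i'.+1 => B al (beta + al *+ i') h (hs beta h0 i') end.

Lemma inv beta h0 i :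
  coef (iter i (wbr a) [:: (beta, h0)]) (beta + al *+ i) = hs beta h0 i /\
  (forall g, g != beta + al *+ i -> w (beta + al *+ i) <= w g ->
     coef (iter i (wbr a) [:: (beta, h0)]) g = 0).
Proof.
elim: i => [|i [IH1 IH2]].
  rewrite /= mulr0n addr0 wcoef_cons wcoef_nil eqxx addr0; split => // g gb _.
  by rewrite wcoef_cons wcoef_nil eq_sym (negbTE gb) addr0.
have [e1 e2] := step IH2.
have -> : beta + al *+ i.+1 = (beta + al *+ i) + al by rewrite mulrSr addrA.
by rewrite iterS e1 IH1.
Qed.

Lemma hpairB (g d : E) (x y : V) (e : E) : hpair (B g d x y) e = hpair x d * hpair y e - hpair y g * hpair x e.
Proof. by rewrite /B hpairD hpairN !hpairZ. Qed.

Hypothesis c0 : [pchar K] =i pred0.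

Lemma nonvanishing : exists beta h0, forall i, hs beta h0 i != 0.
Proof.
have h0nz : h != 0 := h_nz.
case: (eqVneq (hpair h al) 0) => [p0|pn].
  have [j aj] := nz_entry al_nz.
  have [j' hj] := nz_entry h0nz.
  pose h0 : V := \row_k ((k == j)%:R : K).
  pose beta : E := \row_k ((k == j')%:R : int).
  have e1 : hpair h0 al = (al 0 j)%:~R.
    rewrite /hpair (bigD1 j) //= big1 ?addr0 => [|k kj]; rewrite mxE.
      by rewrite eqxx mul1r.
    by rewrite (negbTE kj) mul0r.
  have e2 : hpair h beta = h 0 j'.
    rewrite /hpair (bigD1 j') //= big1 ?addr0 => [|k kj]; rewrite mxE.
      by rewrite eqxx mulr1.
    by rewrite (negbTE kj) mulr0.
  have I : forall i, hpair (hs beta h0 i) al = hpair h beta ^+ i * hpair h0 al.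
    elim=> [|i IH]; first by rewrite expr0 mul1r.
    rewrite /= hpairB IH hpairDr hpairMn p0 mul0rn addr0 mulr0 subr0.
    by rewrite exprS mulrA.
  exists beta, h0 => i; apply/eqP => e.
  have := I i; rewrite e hpair0 => /esym/eqP.
  by rewrite mulf_eq0 expf_eq0 e1 e2 (negbTE hj) andbF /= (negbTE (intr_neq0K c0 aj)).
have I : forall i, exists2 k, k != 0 & hs (al *+ 2) h i = k *: h.
  elim=> [|i [k kn ek]]; first by exists 1; rewrite ?oner_eq0 ?scale1r.
  exists (hpair h al *+ i.+1 * k).
    rewrite mulf_eq0 negb_or kn andbT -mulr_natr mulf_eq0 negb_or pn /=.
    by move/pcharf0P: c0 => ->.
  rewrite /= ek /B hpairZ hpairDr !hpairMn scalerA -scalerBl; congr (_ *: _).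
  by rewrite -mulrnDr add2n mulrS mulrDl [k * _]mulrC addrAC subrr add0r.
exists (al *+ 2), h => i; have [k kn ->] := I i.
by rewrite scaler_eq0 negb_or kn.
Qed.

Lemma not_lf : ~ locally_finite a.
Proof.
move=> lf.
have [beta [h0 Hnz]] := nonvanishing.
have [L HL] := lf [:: (beta, h0)].
pose S := flatten [seq map fst l | l <- L].
have [j aj] := nz_entry al_nz.
have inj : injective (fun i : nat => beta + al *+ i).
  move=> i k /addrI /(congr1 (fun x : E => x 0 j)); rewrite !mxMn => e.
  have e2 : (al 0 j : int) *+ i = (al 0 j : int) *+ k := e.
  have aj2 : (al 0 j : int) != 0 := aj.
  move: e2 aj2; clear; move: (al 0 j) => z; nia.
have [i _ iS] : exists2 i, i \in iota 0 (size S).+1 & beta + al *+ i \notin S.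
  apply/allPn; apply/negP => /allP H.
  have : uniq [seq beta + al *+ i | i <- iota 0 (size S).+1].
    by rewrite map_inj_uniq ?iota_uniq.
  move/uniq_leq_size => /(_ S) H2.
  have H3 : {subset [seq (beta + al *+ i)%R | i <- iota 0 (size S).+1] <= S}.
    by move=> x /mapP [m mi ->]; apply: H.
  by move: (H2 H3); rewrite size_map size_iota ltnn.
have [c Hc] := HL i.
have [e1 _] := inv beta h0 i.
have := Hnz i; rewrite -e1 Hc => /coef_nz_mem /wcomb_fst.
by rewrite (negbTE iS).
Qed.

End W3.



Section W4.
Variable n : nat.
Local Notation E := 'rV[int]_n.

Definition pol (x : E) : {poly int} := \sum_(j < n) x 0 j *: 'X^j.

Lemma polD x y : pol (x + y) = pol x + pol y.
Proof. by rewrite /pol -big_split; apply: eq_bigr => j _; rewrite mxE scalerDl. Qed.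

Lemma coef_pol x (j : 'I_n) : (pol x)`_j = x 0 j.
Proof.
rewrite /pol coef_sum (bigD1 j) //= coefZ coefXn eqxx mulr1 big1 ?addr0 // => k kj.
by rewrite coefZ coefXn eq_sym (negbTE (kj : (k : nat) != j)) mulr0.
Qed.

Lemma pol_nz x : x != 0 -> pol x != 0.
Proof.
move=> /nz_entry [j xj]; apply/eqP => e.
by move: xj; rewrite -coef_pol e coef0 eqxx.
Qed.

Lemma exists_w (S : seq E) : exists w : E -> int,
  (forall x y, w (x + y) = w x + w y) /\ {in S &, injective w}.
Proof.
pose P := \prod_(x <- S) \prod_(y <- S | x != y) pol (x - y).
have P0 : P != 0.
  rewrite prodf_seq_neq0; apply/allP => x _ /=; rewrite prodf_seq_neq0.
  by apply/allP => y _; apply/implyP => xy; apply: pol_nz; rewrite subr_eq0.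
have [t tn] : exists t, ~~ root P t.
  pose rs := [seq i%:Z | i <- iota 0 (size P)].
  have : ~~ all (root P) rs.
    apply/negP => H.
    have := max_poly_roots P0 H.
    rewrite map_inj_uniq ?iota_uniq; last by move=> ? ? [].
    by rewrite size_map size_iota ltnn => /(_ isT).
  by case/allPn => t _ tn; exists t.
exists (fun x => (pol x).[t]); split; first by move=> x y; rewrite polD hornerD.
move=> x y xS yS /= e; apply/eqP; apply/negPn/negP => xy.
move: tn; rewrite /root /P horner_prod prodf_seq_eq0 => /negP; apply; apply/hasP; exists x => //=.
rewrite horner_prod prodf_seq_eq0; apply/hasP; exists y => //=; rewrite xy /=.
have : (pol (x - y)).[t] + (pol y).[t] = (pol x).[t] by rewrite -hornerD -polD subrK.
by rewrite e => /(canRL (addrK _)) ->; rewrite subrr.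
Qed.

Lemma argmax (S : seq E) (f : E -> int) : S != [::] ->
  exists2 m, m \in S & forall y, y \in S -> f y <= f m.
Proof.
elim: S => [//|y S IH] _.
case: (eqVneq S [::]) => [->|/IH [m mS Hm]].
  by exists y; [rewrite inE eqxx | move=> z; rewrite inE => /eqP ->].
case: (leP (f y) (f m)) => [ym|my].
  exists m; first by rewrite inE mS orbT.
  by move=> z; rewrite inE => /orP [/eqP ->|/Hm].
exists y; first by rewrite inE eqxx.
move=> z; rewrite inE => /orP [/eqP ->|/Hm h] //.
exact: le_trans h (ltW my).
Qed.
End W4.

Unset Implicit Arguments.

Theorem lemma2p3 (K : fieldType) (n : nat) (charK0 : [pchar K] =i pred0)
  (a : wexpr K n) (a_nz : wnonzero a) (a_lf : locally_finite a)
  (lam : 'rV[int]_n) :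
  locally_finite (lplus lam a) /\ locally_finite (lminus lam a).
Proof.
have a0 : forall g, g != 0 -> coef a g = 0.
  move=> g0 g0n; apply/eqP; apply/negPn/negP => ag.
  have memS : forall g, (g \in wsupp a) = (coef a g != 0).
    move=> g; rewrite /wsupp mem_filter; apply/andP/idP => [[]//|h].
    by split=> //; apply: coef_nz_mem.
  have g0S : g0 \in wsupp a by rewrite memS.
  have Sn : wsupp a != [::] by move: g0S; case: (wsupp a).
  have [w [wD winj]] := exists_w (wsupp a).
  have [M MS HM] := argmax w Sn.
  have [m mS Hm] := argmax (fun x => - w x) Sn.
  case: (eqVneq M 0) => [M0|Mn].
    case: (eqVneq m 0) => [m0|mn].
      have := HM _ g0S; have := Hm _ g0S; rewrite M0 m0 lerN2 => h1 h2.
      have e : w g0 = w 0 by apply/eqP; rewrite eq_le h1 h2.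
      by move: g0n; rewrite (winj _ _ g0S _ e) ?eqxx // -m0.
    apply: (not_lf (w := fun x => - w x) (al := m)) a_lf => //.
    - by move=> x y; rewrite wD opprD.
    - by rewrite -memS.
    move=> g ga gm; rewrite lt_neqAle Hm ?memS // andbT.
    apply/negP => /eqP /oppr_inj e; move: gm.
    by rewrite (winj _ _ _ _ e) ?eqxx // memS.
  apply: (not_lf (w := w) (al := M)) a_lf => //.
  - by rewrite -memS.
  move=> g ga gM; rewrite lt_neqAle HM ?memS // andbT.
  apply/negP => /eqP e; move: gM.
  by rewrite (winj _ _ _ _ e) ?eqxx // memS.
split; apply: lf0 => g gn; rewrite /lplus /lminus coef_hcomp a0 //; by case: ifP.
Qed.
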